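(* Let $R$ be a ring with $|R|\geq 2$, regarded also as a semiring. The following are equivalent: (1) $R$ is ideal-simple as a ring (its only ring ideals are $\{0\}$ and $R$); (2) $R$ is ideal-free as a semiring; (3) $R$ is $k$-simple as a semiring; (4) $R$ is congruence-simple as a ring; (5) $R$ is congruence-simple as a semiring; (6) $R$ is $k$-congruence-simple as a semiring.
   Context: A semiring $(R,+,\cdot)$ is a set with two binary operations such that $(R,+)$ is a commutative semigroup, $(R,\cdot)$ is a semigroup, and multiplication distributes over addition from both sides. A zero of $R$ is an element $0$ with $0+r=r$ and $0r=r0=0$ for all $r$. A (semiring) ideal of $R$ is a nonempty subset $A\subseteq R$ with $a+b\in A$ and $ra,ar\in A$ for all $a,b\in A$, $r\in R$; the trivial ideals are $R$ and $\{0\}$ (when a zero exists). $R$ is ideal-free if it has no nontrivial semiring ideals. For an ideal $A$, its $k$-closure is $\overline{A}=\{x\in R\mid x+a=b \text{ for some } a,b\in A\}$, and $A$ is a $k$-ideal if $A=\overline{A}$; $R$ is $k$-simple if it has no nontrivial $k$-ideals. A congruence on $R$ (as semiring) is an equivalence relation $\equiv$ with $a\equiv b$ implying $a+c\equiv b+c$, $ac\equiv bc$, $ca\equiv cb$; $R$ is congruence-simple (as a semiring, resp. as a ring with ring congruences) if it has exactly two congruences, namely $\mathrm{id}_R$ and $R\times R$. For an ideal $A$, $\kappa_A$ is the congruence defined by $x\,\kappa_A\,y$ iff $x+a=y+b$ for some $a,b\in A$; a congruence is a $k$-congruence if it equals $\kappa_A$ for some ideal $A$; $R$ is $k$-congruence-simple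 if it has no $k$-congruences other than $R\times R$ and $\mathrm{id}_R$. *)

(* Defs.v *)
From mathcomp Require Import all_boot all_algebra.
Set Implicit Arguments. Unset Strict Implicit. Unset Printing Implicit Defensive.
Import GRing.Theory.
Local Open Scope ring_scope.

(** * Generic semiring notions, for a carrier [T] with addition [add]
      and multiplication [mul] (the semiring axioms are hypotheses of the
      theorem where they are used). *)
Section SemiringNotions.
Variables (T : Type) (add mul : T -> T -> T).

Definition rel_eq (c d : T -> T -> Prop) := forall x y, c x y <-> d x y.
Definition set_eq (A B : T -> Prop) := forall x, A x <-> B x.

Definition is_sr_zero (z : T) :=
  forall r, add z r = r /\ mul z r = z /\ mul r z = z.

Definition sr_ideal (A : T -> Prop) :=
  (exists a, A a) /\
  (forall a b, A a -> A b -> A (add a b)) /\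
  (forall r a, A a -> A (mul r a) /\ A (mul a r)).

Definition sr_trivial (A : T -> Prop) :=
  set_eq A (fun _ => True) \/ (exists z, is_sr_zero z /\ set_eq A (fun x => x = z)).

Definition ideal_free := forall A, sr_ideal A -> sr_trivial A.

Definition kclosure (A : T -> Prop) : T -> Prop :=
  fun x => exists a b, A a /\ A b /\ add x a = b.

Definition k_ideal (A : T -> Prop) := sr_ideal A /\ set_eq A (kclosure A).

Definition k_simple := forall A, k_ideal A -> sr_trivial A.

Definition equivalence_rel (c : T -> T -> Prop) :=
  (forall x, c x x) /\ (forall x y, c x y -> c y x) /\
  (forall x y z, c x y -> c y z -> c x z).

Definition sr_congruence (c : T -> T -> Prop) :=
  equivalence_rel c /\
  forall a b r, c a b ->
    c (add a r) (add b r) /\ c (mul a r) (mul b r) /\ c (mul r a) (mul r b).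

Definition sr_congruence_simple :=
  forall c, sr_congruence c -> rel_eq c eq \/ rel_eq c (fun _ _ => True).

Definition kappa (A : T -> Prop) : T -> T -> Prop :=
  fun x y => exists a b, A a /\ A b /\ add x a = add y b.

Definition k_congruence (c : T -> T -> Prop) :=
  exists A, sr_ideal A /\ rel_eq c (kappa A).

Definition k_congruence_simple :=
  forall c, k_congruence c -> rel_eq c eq \/ rel_eq c (fun _ _ => True).

End SemiringNotions.

(** * Ring notions for a (not necessarily unital) ring given by an additive
      group [V : zmodType] with a multiplication [mul]. *)
Section RingNotions.
Variables (V : zmodType) (mul : V -> V -> V).

Definition ring_ideal (A : V -> Prop) :=
  A 0 /\ (forall a b, A a -> A b -> A (a + b)) /\ (forall a, A a -> A (- a)) /\
  (forall r a, A a -> A (mul r a) /\ A (mul a r)).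

Definition ring_ideal_simple :=
  forall A, ring_ideal A ->
    set_eq A (fun x => x = 0) \/ set_eq A (fun _ => True).

Definition ring_congruence (c : V -> V -> Prop) :=
  equivalence_rel c /\
  forall a b r, c a b ->
    c (a + r) (b + r) /\ c (- a) (- b) /\ c (mul a r) (mul b r) /\ c (mul r a) (mul r b).

Definition ring_congruence_simple :=
  forall c, ring_congruence c -> rel_eq c eq \/ rel_eq c (fun _ _ => True).

End RingNotions.

(* Main.v *)
Require Import Defs.
From mathcomp Require Import all_boot all_algebra.
From mathcomp Require Import zify.
Import GRing.Theory.
Local Open Scope ring_scope.

Set Implicit Arguments. Unset Strict Implicit.
Section Aux.
Variables (V : zmodType) (mul : V -> V -> V).
Hypothesis mulA : forall x y z, mul x (mul y z) = mul (mul x y) z.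
Hypothesis mulDl : forall x y z, mul (x + y) z = mul x z + mul y z.
Hypothesis mulDr : forall x y z, mul x (y + z) = mul x y + mul x z.

Lemma m0r x : mul 0 x = 0.
Proof.
have h := mulDl 0 0 x; rewrite add0r in h.
apply: (addrI (mul 0 x)); by rewrite addr0 -h.
Qed.

Lemma mr0 x : mul x 0 = 0.
Proof.
have h := mulDr x 0 0; rewrite add0r in h.
apply: (addrI (mul x 0)); by rewrite addr0 -h.
Qed.

Lemma mNr x y : mul (- x) y = - mul x y.
Proof. apply: (addrI (mul x y)); by rewrite -mulDl !subrr m0r. Qed.

Lemma mrN x y : mul x (- y) = - mul x y.
Proof. apply: (addrI (mul x y)); by rewrite -mulDr !subrr mr0. Qed.

Lemma zero_is : is_sr_zero +%R mul 0.
Proof. move=> r; by rewrite add0r m0r mr0. Qed.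

Lemma triv_inv A : sr_trivial +%R mul A ->
  set_eq A (fun _ => True) \/ set_eq A (fun x => x = 0).
Proof.
case=> [h|[z [hz h]]]; [by left|right].
have : z = 0 by have [+ _] := hz 0; rewrite addr0.
by move=> e; rewrite -e.
Qed.

Lemma triv_zero A : set_eq A (fun x => x = 0) -> sr_trivial +%R mul A.
Proof. move=> h; right; exists 0; split=> //; exact: zero_is. Qed.

Lemma ring_ideal_k A : ring_ideal mul A -> k_ideal +%R mul A.
Proof.
move=> [h0 [hD [hN hM]]]; split; first by split; [exists 0|split].
move=> x; split.
  by move=> hx; exists 0, x; rewrite addr0.
move=> [a [b [ha [hb e]]]].
have -> : x = b - a by rewrite -e addrK.
by apply: hD => //; apply: hN.
Qed.

Lemma kcl_ring_ideal A : sr_ideal +%R mul A -> ring_ideal mul (kclosure +%R A).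
Proof.
move=> [[a0 ha0] [hD hM]].
have h0 : A 0 by rewrite -(m0r a0); exact: (hM 0 a0 ha0).1.
split; first by exists 0, 0; rewrite addr0.
split.
  move=> x y [a [b [ha [hb e]]]] [a' [b' [ha' [hb' e']]]].
  exists (a + a'), (b + b'); do 2!(split; first by apply: hD).
  by rewrite -e -e' addrACA.
split.
  move=> x [a [b [ha [hb e]]]]; exists b, a; do 2!split=> //.
  by rewrite -e addKr.
move=> r x [a [b [ha [hb e]]]]; split.
  exists (mul r a), (mul r b); split; first exact: (hM r a ha).1.
  split; first exact: (hM r b hb).1.
  by rewrite -mulDr e.
exists (mul a r), (mul b r); split; first exact: (hM r a ha).2.
split; first exact: (hM r b hb).2.
by rewrite -mulDl e.
Qed.

Lemma cong_ideal c : ring_congruence mul c -> ring_ideal mul (fun x => c x 0).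
Proof.
move=> [[hr [hs ht]] hc]; split; first exact: hr.
split.
  move=> a b ha hb; have [h _] := hc _ _ b ha; rewrite add0r in h.
  exact: ht h hb.
split.
  by move=> a ha; have [_ [h _]] := hc _ _ 0 ha; rewrite oppr0 in h.
move=> r a ha; have [_ [_ [h1 h2]]] := hc _ _ r ha.
by rewrite m0r in h1; rewrite mr0 in h2.
Qed.

Lemma ideal_cong A : ring_ideal mul A -> ring_congruence mul (fun x y => A (x - y)).
Proof.
move=> [h0 [hD [hN hM]]]; split.
  split; first by move=> x; rewrite subrr.
  split; first by move=> x y h; rewrite -opprB; apply: hN.
  by move=> x y z h1 h2; have := hD _ _ h1 h2; rewrite addrA subrK.
move=> a b r h; split; first by rewrite opprD addrACA subrr addr0.
split; first by rewrite -opprD; apply: hN.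
split.
  by have := (hM r _ h).2; rewrite mulDl mNr.
by have := (hM r _ h).1; rewrite mulDr mrN.
Qed.

Lemma cong_simple_of c : ring_congruence mul c ->
  (set_eq (fun x => c x 0) (fun _ => True) \/ set_eq (fun x => c x 0) (fun x => x = 0)) ->
  rel_eq c eq \/ rel_eq c (fun _ _ => True).
Proof.
move=> [[hr [hs ht]] hc] [h|h].
  right=> x y; split=> // _.
  have [+ _] := hc (x - y) 0 y ((h (x - y)).2 I).
  by rewrite subrK add0r.
left=> x y; split; last by move=> ->.
move=> hxy; have [+ _] := hc x y (- y) hxy; rewrite subrr => /(h _).1.
by move/eqP; rewrite subr_eq0 => /eqP.
Qed.

Lemma sr_ring_cong c : sr_congruence +%R mul c -> ring_congruence mul c.
Proof.
move=> [[hr [hs ht]] hc]; split; first by split.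
move=> a b r h; have [h1 [h2 h3]] := hc a b r h; split=> //; split=> //.
have [+ _] := hc a b (- a - b) h.
have -> : a + (- a - b) = - b by rewrite addrA subrr add0r.
have -> : b + (- a - b) = - a by rewrite addrC subrK.
exact: hs.
Qed.

Lemma ring_sr_cong c : ring_congruence mul c -> sr_congruence +%R mul c.
Proof. by move=> [he hc]; split=> // a b r h; have [? [? [? ?]]] := hc a b r h. Qed.

Lemma kappa_cong A : sr_ideal +%R mul A -> ring_congruence mul (kappa +%R A).
Proof.
move=> [[a0 ha0] [hD hM]]; split.
  split; first by move=> x; exists a0, a0.
  split; first by move=> x y [a [b [ha [hb e]]]]; exists b, a.
  move=> x y z [a [b [ha [hb e]]]] [a' [b' [ha' [hb' e']]]].
  exists (a + a'), (b + b'); do 2!(split; first by apply: hD).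
  by rewrite addrA e -addrA [b + a']addrC addrA e' -addrA [b' + b]addrC.
move=> x y r [a [b [ha [hb e]]]]; split.
  by exists a, b; do 2!split=> //; rewrite addrAC e addrAC.
split.
  exists b, a; do 2!split=> //.
  apply: (addrI (x + y)); rewrite [x + y]addrC addrA addrK.
  by rewrite -e addrC addrA addrK addrC.
split.
  exists (mul a r), (mul b r); split; first exact: (hM r a ha).2.
  split; first exact: (hM r b hb).2.
  by rewrite -!mulDl e.
exists (mul r a), (mul r b); split; first exact: (hM r a ha).1.
split; first exact: (hM r b hb).1.
by rewrite -!mulDr e.
Qed.

Lemma nat_in A a n : sr_ideal +%R mul A -> A a -> A (a *+ n).
Proof.
move=> [[a0 ha0] [hD hM]] ha.
have h0 : A 0 by rewrite -(m0r a0); exact: (hM 0 a0 ha0).1.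
elim: n => [|n IH]; first by rewrite mulr0n.
by rewrite mulrS; apply: hD.
Qed.

End Aux.

Theorem corollary4p5 (V : zmodType) (mul : V -> V -> V)
  (mulA : forall x y z, mul x (mul y z) = mul (mul x y) z)
  (mulDl : forall x y z, mul (x + y) z = mul x z + mul y z)
  (mulDr : forall x y z, mul x (y + z) = mul x y + mul x z)
  (card2 : exists x y : V, x <> y) :
  [<-> ring_ideal_simple mul;
       ideal_free +%R mul;
       k_simple +%R mul;
       ring_congruence_simple mul;
       sr_congruence_simple +%R mul;
       k_congruence_simple +%R mul].
Proof.
tfae.
- move=> H A hA.
  have [[a0 ha0] [hD hM]] := hA.
  have h0 : A 0 by rewrite -(m0r mulDl a0); exact: (hM 0 a0 ha0).1.
  pose D := fun x => A x /\ A (- x).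
  have hDi : ring_ideal mul D.
    split; first by split=> //; rewrite oppr0.
    split.
      move=> a b [ha ha'] [hb hb']; split; first exact: hD.
      by rewrite opprD; apply: hD.
    split; first by move=> a [ha ha']; split=> //; rewrite opprK.
    move=> r a [ha ha']; split; split.
    - exact: (hM r a ha).1.
    - by rewrite -(mrN mulDr); exact: (hM r _ ha').1.
    - exact: (hM r a ha).2.
    - by rewrite -(mNr mulDl); exact: (hM r _ ha').2.
  case: (H D hDi) => hDs; last first.
    by left=> x; split=> // _; exact: ((hDs x).2 I).1.
  have hE := kcl_ring_ideal mulDl mulDr hA.
  case: (H _ hE) => hEs.
    apply: (triv_zero mulDl mulDr) => x; split; last by move=> ->.
    by move=> hx; apply/(hEs x).1; exists 0, x; rewrite addr0.
  have hz1 : forall a v, A a -> mul a v = 0.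
    move=> a v ha; apply/(hDs _).1; split; first exact: (hM v a ha).2.
    rewrite -(mrN mulDr); exact: (hM (- v) a ha).2.
  have hz : forall x y, mul x y = 0.
    move=> x y; have [a [b [ha [hb e]]]] := (hEs x).2 I.
    have -> : x = b - a by rewrite -e addrK.
    by rewrite mulDl (mNr mulDl) !hz1 // subrr.
  have hneg : forall a, A a -> A (- a).
    move=> a ha.
    pose B := fun x => exists n m : nat, x = a *+ (2 * n) - a *+ (2 * m).
    have hB : ring_ideal mul B.
      split; first by exists 0%N, 0%N; rewrite subrr.
      split.
        move=> x y [n [m ->]] [n' [m' ->]]; exists (n + n')%N, (m + m')%N.
        by rewrite (mulnDr 2 n n') (mulnDr 2 m m') (mulrnDr a (2 * n)) (mulrnDr a (2 * m)) opprD addrACA.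
      split; first by move=> x [n [m ->]]; exists m, n; rewrite opprB.
      by move=> r x _; rewrite !hz; split; exists 0%N, 0%N; rewrite subrr.
    case: (H B hB) => hBs.
      have : B (a *+ 2) by exists 1%N, 0%N; rewrite muln1 mulr0n subr0.
      move/(hBs _).1 => e.
      have -> : - a = a by rewrite -(addr0 (- a)) -e mulr2n addKr.
      exact: ha.
    have [n [m e]] := (hBs a).2 I.
    case: (leqP n m) => hnm.
      have [k hk] : exists k, (2 * m = 2 * n + k)%N.
        by exists (2 * m - 2 * n)%N; lia.
      have -> : - a = a *+ k.
        by rewrite {1}e hk (mulrnDr a (2 * n) k) opprB addrAC subrr add0r.
      exact: (@nat_in _ _ mulDl A a k hA ha).
    have [k hk] : exists k, (2 * n = k.+2 + 2 * m)%N.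
      by exists (2 * n - 2 * m - 2)%N; lia.
    have e2 : a + (a + a *+ k) = a + 0.
      by rewrite addr0 -!mulrS [RHS]e hk mulrnDr addrK.
    have e3 := addrI _ e2.
    have -> : - a = a *+ k by rewrite -(addr0 (- a)) -e3 addKr.
    exact: (@nat_in _ _ mulDl A a k hA ha).
  apply: (triv_zero mulDl mulDr) => x; split; last by move=> ->.
  move=> hx; apply/(hDs x).1; split=> //; exact: hneg.
- by move=> H A [hA _]; apply: H.
- move=> H c hc; apply: (cong_simple_of hc); apply: triv_inv.
  apply: H; apply: ring_ideal_k; exact: (cong_ideal mulDl mulDr hc).
- move=> H c hc; apply: H; exact: sr_ring_cong.
- move=> H c [A [hA hc]].
  have := H _ (ring_sr_cong (kappa_cong mulDl mulDr hA)).
  case=> h; [left|right] => x y; split.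
  + by move/(hc x y).1/(h x y).1.
  + by move/(h x y).2/(hc x y).2.
  + by move/(hc x y).1/(h x y).1.
  + by move/(h x y).2/(hc x y).2.
- move=> H A hA.
  have hsr : sr_ideal +%R mul A.
    by case: hA => [h0 [hD [hN hM]]]; split; [exists 0|split].
  have hkx : forall x, kappa +%R A x 0 <-> A x.
    case: hA => [h0 [hD [hN hM]]] x; split.
      move=> [a [b [ha [hb e]]]]; have -> : x = b - a by rewrite -(add0r b) -e addrK.
      by apply: hD => //; apply: hN.
    by move=> hx; exists 0, x; rewrite addr0 add0r.
  have hk : k_congruence +%R mul (kappa +%R A).
    by exists A; split=> // x y.
  case: (H _ hk) => h; [left|right] => x; split.
  + by move/(hkx x).2/(h x 0).1.
  + by move=> hx; apply/(hkx x).1/(h x 0).2.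
  + by [].
  + by move=> _; apply/(hkx x).1/(h x 0).2.
Qed.
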